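(* Let $(F_0,F_1,F_2)$ be a gapset filtration such that $\max F_0=\max F_1=\max F_2=m$. Let $F'_i=F_i\setminus\{m\}$ for $i=0,1,2$. Then $(F'_0,F'_1,F'_2)$ is a gapset filtration.
   Context: A gapset is a finite set $G \subset \mathbb{N}_+$ such that for all $z \in G$, whenever $z=x+y$ with $x,y\in\mathbb{N}_+$, we have $x\in G$ or $y\in G$. For $k\ge1$, a $k$-filtration is a sequence $(F_0,\dots,F_t)$ with $F_0=[1,k-1]\supseteq F_1\supseteq\dots\supseteq F_t$; it is a gapset filtration if $\bigcup_i(ik+F_i)$ is a gapset (so a filtration $(F_0,F_1,F_2)$ with $\max F_0=m$ is an $(m+1)$-filtration, and $(F'_0,F'_1,F'_2)$ is considered as an $m$-filtration). Here $j+A=\{j+a:a\in A\}$. *)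

(* Defs.v *)
From Stdlib Require Import Arith Lia.

Definition is_gapset (G : nat -> Prop) : Prop :=
  (exists N, forall z, G z -> 1 <= z <= N) /\
  (forall z x y, G z -> 1 <= x -> 1 <= y -> z = x + y -> G x \/ G y).

Definition is_filtration (k t : nat) (F : nat -> nat -> Prop) : Prop :=
  1 <= k /\
  (forall x, F 0 x <-> 1 <= x <= k - 1) /\
  (forall i x, i < t -> F (S i) x -> F i x).

Definition filtration_union (k t : nat) (F : nat -> nat -> Prop) : nat -> Prop :=
  fun z => exists i a, i <= t /\ F i a /\ z = i * k + a.

Definition is_gapset_filtration (k t : nat) (F : nat -> nat -> Prop) : Prop :=
  is_filtration k t F /\ is_gapset (filtration_union k t F).

Definition is_max (A : nat -> Prop) (m : nat) : Prop :=
  A m /\ forall x, A x -> x <= m.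

(* Main.v *)
Require Import Defs.
From Stdlib Require Import Arith.
From Stdlib Require Import Lia.

Theorem mainTheorem15 (F : nat -> nat -> Prop) (m : nat) :
  is_gapset_filtration (m + 1) 2 F ->
  is_max (F 0) m -> is_max (F 1) m -> is_max (F 2) m ->
  is_gapset_filtration m 2 (fun i x => F i x /\ x <> m).
Proof.
  intros [[Hk [H0 Hn]] [[N HN] Hg]] [Hm0 Hmx0] _ _.
  assert (Hto0 : forall j d, j <= 2 -> F j d -> F 0 d).
  { intros j d Hj Hd. destruct j as [|[|[|j]]].
    - exact Hd.
    - apply Hn; [lia| exact Hd].
    - apply Hn; [lia|]. apply Hn; [lia| exact Hd].
    - lia. }
  assert (Hr : forall d, F 0 d <-> 1 <= d <= m) by (intro d; rewrite H0; lia).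
  assert (Hm1 : 1 <= m) by (apply Hr in Hm0; lia).
  split; [split; [lia| split]|split].
  - intro x; split.
    + intros [Hx Hxm]. apply Hr in Hx. lia.
    + intros Hx. split; [apply Hr; lia| lia].
  - intros i x Hi [Hx Hxm]. split; [apply Hn; auto| auto].
  - exists (3*m). intros z [i [a [Hi [[Ha Ham] Hz]]]].
    assert (Ha0 := Hto0 i a Hi Ha). apply Hr in Ha0.
    destruct i as [|[|[|i]]]; lia.
  - assert (Hsmall : forall w, 1 <= w <= m - 1 ->
              (fun z => exists i a, i <= 2 /\ (F i a /\ a <> m) /\ z = i * m + a) w).
    { intros w Hw. exists 0, w. split; [lia|]. split; [split; [apply Hr; lia| lia]| lia]. }
    intros z x y [i [a [Hi [[Ha Ham] Hz]]]] Hx Hy Hxy.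
    assert (Ha0 := Hto0 i a Hi Ha). apply Hr in Ha0.
    destruct (Nat.lt_ge_cases x m) as [Hxm|Hxm]; [left; apply Hsmall; lia|].
    destruct (Nat.lt_ge_cases y m) as [Hym|Hym]; [right; apply Hsmall; lia|].
    destruct i as [|[|[|i]]]; try lia.
    assert (Ha1 : F 1 a) by (apply Hn; [lia|exact Ha]).
    destruct (Nat.eq_dec x m) as [Ex|Ex].
    { right. exists 1, a. split; [lia|]. split; [split; assumption| lia]. }
    destruct (Nat.eq_dec y m) as [Ey|Ey].
    { left. exists 1, a. split; [lia|]. split; [split; assumption| lia]. }
    assert (HG : forall b, 1 <= b < m ->
      filtration_union (m+1) 2 F (m + 1 + b) -> F 1 b).
    { intros b Hb [j [d [Hj [Hd Heq]]]].
      assert (Hd0 := Hto0 j d Hj Hd). apply Hr in Hd0.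
      destruct j as [|[|[|j]]]; try lia.
      replace b with d by lia. exact Hd. }
    assert (Hzt : filtration_union (m+1) 2 F (2*(m+1)+a)).
    { exists 2, a. split; [lia|]. split; [exact Ha| lia]. }
    destruct (Hg _ (m+1+(x-m)) (m+1+(y-m)) Hzt ltac:(lia) ltac:(lia) ltac:(lia))
      as [Gx|Gy].
    + left. exists 1, (x-m). split; [lia|].
      split; [split; [apply HG; [lia|exact Gx]| lia]| lia].
    + right. exists 1, (y-m). split; [lia|].
      split; [split; [apply HG; [lia|exact Gy]| lia]| lia].
Qed.
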